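(* Let $L$ be a post-Lie-Rinehart algebra over $R$, with anchor map $\rho$ and connection $\rhd$. Then \[ E\ell_R(L)=\{\delta X:X\in L\}\circ \mathrm{gen}(\{\delta X,\tilde\delta X:X\in L\}). \] That is, $E\ell_R(L)$ consists exactly of the (linear combinations of) compositions $\delta X\circ\phi_1\circ\cdots\circ\phi_k$ with $k\ge0$, $X\in L$, and each $\phi_i$ of the form $\delta Y$ or $\tilde\delta Y$ with $Y\in L$. In other words, these are all the ways of repeatedly composing elements of the forms $\delta X,\tilde\delta X$ such that the leftmost factor is of the form $\delta X$.
   Context: Let $R$ be a commutative unital algebra. A Lie-Rinehart algebra over $R$ is an $R$-module $L$ with a Lie bracket $\llbracket\cdot,\cdot\rrbracket$ and an $R$-linear Lie morphism $\rho:L\to\mathrm{Der}(R)$ such that $\llbracket X,fY\rrbracket=(\rho(X)f)Y+f\llbracket X,Y\rrbracket$. A connection is a map $(X,Y)\mapsto X\rhd Y$ on $L$ that is $R$-linear in $X$ and satisfies $X\rhd(fY)=(\rho(X)f)Y+f\,X\rhd Y$. Its torsion is $T(X,Y)=X\rhd Y-Y\rhd X-\llbracket X,Y\rrbracket$ and its curvature is $\mathcal{R}(X,Y,Z)=X\rhd(Y\rhd Z)-Y\rhd(X\rhd Z)-\llbracket X,Y\rrbracket\rhd Z$. A post-Lie-Rinehart algebra is a Lie-Rinehart algebra with a connection that is flat ($\mathcal{R}=0$) and has constant torsion ($X\rhd T(Y,Z)=T(X\rhd Y,Z)+T(Y,X\rhd Z)$). Put $[X,Y]:=-T(X,Y)$.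 The connection extends to $\mathrm{Hom}_R(L)$ by $(X\rhd u)(Y)=X\rhd u(Y)-u(X\rhd Y)$. Define $\delta X(Z)=Z\rhd X$ and $\tilde\delta X(Z)=Z\rhd X+[Z,X]$. $E\ell_R(L)$ is the $R$-module subalgebra of $\mathrm{Hom}_R(L)$ (with composition as product) generated by the elements $Y_1\rhd(Y_2\rhd(\cdots(Y_n\rhd\delta X)\cdots))$ with $n\ge0$ and $X,Y_i\in L$. For a set $A$ of endomorphisms, $\mathrm{gen}(A)$ denotes the algebra generated by $A$ with composition as product. *)

(* Defs.v *)
From HB Require Import structures.
From mathcomp Require Import all_boot all_order all_algebra.

Set Implicit Arguments.
Unset Strict Implicit.
Unset Printing Implicit Defensive.

Import GRing.Theory.
Local Open Scope ring_scope.

Section PostLieRinehart.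
Variables (K : fieldType) (R : comAlgType K) (L : lmodType R).
Variables (rho : L -> R -> R) (br : L -> L -> L) (conn : L -> L -> L).

Definition is_derivation (D : R -> R) : Prop :=
  (forall f g, D (f + g) = D f + D g) /\
  (forall (k : K) f, D (k *: f) = k *: D f) /\
  (forall f g, D (f * g) = D f * g + f * D g).

Definition is_lie_bracket : Prop :=
  (forall X Y Z, br (X + Y) Z = br X Z + br Y Z) /\
  (forall X Y Z, br X (Y + Z) = br X Y + br X Z) /\
  (forall (k : K) X Y, br (k%:A *: X) Y = k%:A *: br X Y) /\
  (forall (k : K) X Y, br X (k%:A *: Y) = k%:A *: br X Y) /\
  (forall X, br X X = 0) /\
  (forall X Y Z, br X (br Y Z) + br Y (br Z X) + br Z (br X Y) = 0).

Definition is_LieRinehart : Prop :=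
  is_lie_bracket /\
  (forall X, is_derivation (rho X)) /\
  (forall X Y g, rho (X + Y) g = rho X g + rho Y g) /\
  (forall (f : R) X g, rho (f *: X) g = f * rho X g) /\
  (forall X Y g, rho (br X Y) g = rho X (rho Y g) - rho Y (rho X g)) /\
  (forall X (f : R) Y, br X (f *: Y) = rho X f *: Y + f *: br X Y).

(* conn X Y stands for X |> Y *)
Definition is_connection : Prop :=
  (forall X Y Z, conn (X + Y) Z = conn X Z + conn Y Z) /\
  (forall (f : R) X Z, conn (f *: X) Z = f *: conn X Z) /\
  (forall X Y Z, conn X (Y + Z) = conn X Y + conn X Z) /\
  (forall X (f : R) Y, conn X (f *: Y) = rho X f *: Y + f *: conn X Y).

Definition torsion (X Y : L) : L := conn X Y - conn Y X - br X Y.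

Definition curvature (X Y Z : L) : L :=
  conn X (conn Y Z) - conn Y (conn X Z) - conn (br X Y) Z.

Definition is_postLieRinehart : Prop :=
  is_LieRinehart /\ is_connection /\
  (forall X Y Z, curvature X Y Z = 0) /\
  (forall X Y Z, conn X (torsion Y Z) = torsion (conn X Y) Z + torsion Y (conn X Z)).

Definition pbr (X Y : L) : L := - torsion X Y.

Definition ext_conn (X : L) (u : L -> L) : L -> L :=
  fun Y => conn X (u Y) - u (conn X Y).

Definition delta (X : L) : L -> L := fun Z => conn Z X.
Definition deltat (X : L) : L -> L := fun Z => conn Z X + pbr Z X.

(* Y1 |> (Y2 |> ( ... (Yn |> delta X))) for ys = [:: Y1; ...; Yn] *)
Definition iter_gen (X : L) (ys : seq L) : L -> L := foldr ext_conn (delta X) ys.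

(* El_R(L): the R-module subalgebra (under composition, non-unital)
   of Hom_R(L) generated by the iter_gen X ys. *)
Inductive Ell : (L -> L) -> Prop :=
| Ell_gen X ys : Ell (iter_gen X ys)
| Ell_zero : Ell (fun _ => 0)
| Ell_add u v : Ell u -> Ell v -> Ell (fun Y => u Y + v Y)
| Ell_scale (f : R) u : Ell u -> Ell (fun Y => f *: u Y)
| Ell_comp u v : Ell u -> Ell v -> Ell (u \o v).

Definition phi (p : bool * L) : L -> L := if p.1 then delta p.2 else deltat p.2.

Definition word (X : L) (s : seq (bool * L)) : L -> L :=
  delta X \o foldr (fun p g => phi p \o g) id s.

Inductive SpanWords : (L -> L) -> Prop :=
| SW_word X s : SpanWords (word X s)
| SW_zero : SpanWords (fun _ => 0)
| SW_add u v : SpanWords u -> SpanWords v -> SpanWords (fun Y => u Y + v Y)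
| SW_scale (f : R) u : SpanWords u -> SpanWords (fun Y => f *: u Y).

End PostLieRinehart.

(* Main.v *)
Require Import Defs.
From HB Require Import structures.
From mathcomp Require Import all_boot all_order all_algebra.
From Stdlib Require Import FunctionalExtensionality.
From mathcomp Require Import zify.

Set Implicit Arguments.
Unset Strict Implicit.
Unset Printing Implicit Defensive.
Import GRing.Theory.
Local Open Scope ring_scope.

Section ZmodFacts.
Variable V : zmodType.
Implicit Types a b c r x y z : V.
Lemma zf1 a c r b : a - (r + c) - - (r + b) = a - c - - b.
Proof. by rewrite !opprK opprD (addrC (- r)) !addrA subrK. Qed.
Lemma zf2 x y z : x + - (x - y - z) = y + z.
Proof. by rewrite !opprD !opprK !addrA addrN add0r. Qed.
Lemma zf3 a b c : a - b = c - (b + (c - a)).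
Proof. by rewrite opprD opprB addrCA (addrC c) subrK addrC. Qed.
Lemma zf4 a b c (p1 p2 : V) : (a + (p1 + p2)) - (b + p1) = (c + p2) - (b + (c - a)).
Proof.
rewrite (addrC p1) addrA (addrC b) addrKA (addrCA b) (addrC c p2) addrKA opprB.
by rewrite (addrCA p2) addrA.
Qed.
Lemma zf6 a b e : a - (a - b + e) + e = b.
Proof. by rewrite opprD addrA subrK opprB addrC subrK. Qed.
Lemma zf5 x y z : x - z = x - y + (y - z).
Proof. by rewrite addrA subrK. Qed.
End ZmodFacts.

Section Proof.
Variables (K : fieldType) (R : comAlgType K) (L : lmodType R).
Variables (rho : L -> R -> R) (br : L -> L -> L) (conn : L -> L -> L).
Hypothesis HcDl : forall X Y Z, conn (X + Y) Z = conn X Z + conn Y Z.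
Hypothesis HcZl : forall (f : R) X Z, conn (f *: X) Z = f *: conn X Z.
Hypothesis HcDr : forall X Y Z, conn X (Y + Z) = conn X Y + conn X Z.
Hypothesis HcZr : forall X (f : R) Y, conn X (f *: Y) = rho X f *: Y + f *: conn X Y.
Hypothesis HbDl : forall X Y Z, br (X + Y) Z = br X Z + br Y Z.
Hypothesis HbDr : forall X Y Z, br X (Y + Z) = br X Y + br X Z.
Hypothesis HbXX : forall X, br X X = 0.
Hypothesis HbZr : forall X (f : R) Y, br X (f *: Y) = rho X f *: Y + f *: br X Y.
Hypothesis Hflat : forall X Y Z, curvature br conn X Y Z = 0.
Hypothesis Htors : forall X Y Z,
  conn X (torsion br conn Y Z) = torsion br conn (conn X Y) Z + torsion br conn Y (conn X Z).

Definition addf (u : L -> L) := forall a b, u (a + b) = u a + u b.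

Lemma addf0 u : addf u -> u 0 = 0.
Proof. move=> h; have e := h 0 0; rewrite addr0 in e.
by apply: (@addrI _ (u 0)); rewrite addr0 -e. Qed.

Lemma addfN u : addf u -> forall a, u (- a) = - u a.
Proof. by move=> h a; apply/eqP; rewrite -subr_eq0 opprK -h addNr addf0. Qed.

Lemma addfB u : addf u -> forall a b, u (a - b) = u a - u b.
Proof. by move=> h a b; rewrite h addfN. Qed.

Lemma connr_add X : addf (conn X). Proof. exact: HcDr. Qed.
Lemma connl_add X : addf (conn^~ X). Proof. by move=> a b; apply: HcDl. Qed.
Lemma brl_add X : addf (br^~ X). Proof. by move=> a b; apply: HbDl. Qed.

Lemma br_anti X Y : br X Y = - br Y X.
Proof.
have := HbXX (X + Y); rewrite HbDl !HbDr !HbXX add0r addr0.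
by move/eqP; rewrite addr_eq0 => /eqP.
Qed.

Lemma tors_add X : addf (torsion br conn ^~ X).
Proof. by move=> a b; rewrite /torsion HcDl HcDr HbDl !opprD (addrACA (conn a X)) (addrACA (conn a X - conn X a)). Qed.

Lemma pbr_add X : addf (pbr br conn ^~ X).
Proof. by move=> a b; rewrite /pbr (tors_add X a b) opprD. Qed.

Local Notation pb := (pbr br conn).
Local Notation tor := (torsion br conn).
Local Notation dl := (delta conn).
Local Notation dlt := (deltat br conn).
Local Notation ph := (phi br conn).
Local Notation ex := (ext_conn conn).
Local Notation wd := (word br conn).

Lemma tors_scale (f : R) Z X : tor (f *: Z) X = f *: tor Z X.
Proof.
rewrite /torsion HcZl HcZr (br_anti (f *: Z)) HbZr (br_anti Z) !scalerBr scalerN.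
exact: zf1.
Qed.

Lemma pbr_scale (f : R) Z X : pb (f *: Z) X = f *: pb Z X.
Proof. by rewrite /pbr tors_scale scalerN. Qed.

Lemma phi_add p : addf (ph p).
Proof.
case: p => [[] X] a b; rewrite /phi /= /delta ?/deltat HcDl //.
by rewrite pbr_add addrACA.
Qed.

Lemma phi_scale p (f : R) Z : ph p (f *: Z) = f *: ph p Z.
Proof.
case: p => [[] X]; rewrite /phi /= /delta ?/deltat HcZl //.
by rewrite pbr_scale scalerDr.
Qed.

Lemma conn_pbr Y W X : conn Y (pb W X) = pb (conn Y W) X + pb W (conn Y X).
Proof. by rewrite /pbr (addfN (connr_add Y)) Htors opprD. Qed.

Lemma key1 W Y : conn W Y + pb W Y = conn Y W + br W Y.
Proof. by rewrite /pbr /torsion zf2. Qed.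

Lemma flatE W Y X :
  conn W (conn Y X) - conn Y (conn W X) = conn (br W Y) X.
Proof. by have := Hflat W Y X; rewrite /curvature => /eqP; rewrite subr_eq0 => /eqP. Qed.

Lemma ext_phi p Y W :
  ex Y (ph p) W = ph (p.1, conn Y p.2) W - dl p.2 (dlt Y W).
Proof.
case: p => [[] X]; rewrite /phi /ext_conn /= /delta /deltat.
  by rewrite key1 HcDl -flatE; apply: zf3.
by rewrite HcDr conn_pbr (key1 W Y) HcDl -flatE; apply: zf4.
Qed.

Lemma deriv u v Y Z : addf u ->
  ex Y (u \o v) Z = ex Y u (v Z) + u (ex Y v Z).
Proof. by move=> hu; rewrite /ext_conn /= (addfB hu); apply: zf5. Qed.

Definition Pf (t : seq (bool * L)) : L -> L := foldr (fun p g => ph p \o g) id t.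

Lemma Pf_add t : addf (Pf t).
Proof. by elim: t => [//|p t IH] a b; rewrite /= IH phi_add. Qed.

Lemma Pf_scale t (f : R) Z : Pf t (f *: Z) = f *: Pf t Z.
Proof. by elim: t => [//|p t IH]; rewrite /= IH phi_scale. Qed.

Lemma Pf_cat s t Z : Pf (s ++ t) Z = Pf s (Pf t Z).
Proof. by elim: s => [//|p s IH]; rewrite /= IH. Qed.

Lemma wordE X s Z : wd X s Z = conn (Pf s Z) X.
Proof. by []. Qed.

Lemma word_add X s : addf (wd X s).
Proof. by move=> a b; rewrite !wordE Pf_add HcDl. Qed.

Lemma word_scale X s (f : R) Z : wd X s (f *: Z) = f *: wd X s Z.
Proof. by rewrite !wordE Pf_scale HcZl. Qed.

Lemma word_cat X s t Z : wd X (s ++ t) Z = wd X s (Pf t Z).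
Proof. by rewrite !wordE Pf_cat. Qed.

Lemma word_comp X s W t Z : wd X s (wd W t Z) = wd X (s ++ (true, W) :: t) Z.
Proof. by rewrite word_cat. Qed.

Lemma ext_id Y Z : ex Y id Z = 0.
Proof. by rewrite /ext_conn subrr. Qed.

Lemma word_rcons X s p Z : wd X (rcons s p) Z = wd X s (ph p Z).
Proof. by rewrite -cats1 word_cat. Qed.

Lemma ext_words (Q : (L -> L) -> Prop) (Y : L) n :
  Q (fun _ => 0) ->
  (forall u v, Q u -> Q v -> Q (fun Z => u Z + v Z)) ->
  (forall u v, Q u -> Q v -> Q (fun Z => u Z - v Z)) ->
  (forall u v, Q u -> Q v -> Q (u \o v)) ->
  (forall X s, (size s < n)%N -> Q (wd X s)) ->
  forall t s X, (size s + size t < n)%N -> Q (fun Z => wd X s (ex Y (Pf t) Z)).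
Proof.
move=> Q0 QD QB QC Qw; elim=> [|p t IH] s X hs.
  have -> : (fun Z => wd X s (ex Y (Pf [::]) Z)) = fun _ => 0.
    by apply: functional_extensionality => Z; rewrite ext_id (addf0 (word_add X s)).
  exact: Q0.
have -> : (fun Z => wd X s (ex Y (Pf (p :: t)) Z)) =
  fun Z => (fun Z => wd X (s ++ (p.1, conn Y p.2) :: t) Z -
                     (wd X s \o wd p.2 ((false, Y) :: t)) Z) Z
           + wd X (rcons s p) (ex Y (Pf t) Z).
  apply: functional_extensionality => Z.
  rewrite [Pf (p :: t)]/= deriv; last exact: phi_add.
  by rewrite word_add ext_phi (addfB (word_add X s)) word_rcons word_cat.
apply: QD; last by apply: IH; rewrite size_rcons /=; move: hs => /=; lia.
apply: QB; first by apply: Qw; rewrite size_cat /=; move: hs => /=; lia.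
by apply: QC; apply: Qw; move: hs => /=; lia.
Qed.

Lemma iter_add X ys : addf (iter_gen conn X ys).
Proof.
elim: ys => [|Y ys IH] a b; first by rewrite /iter_gen /= /delta HcDl.
have e Z : iter_gen conn X (Y :: ys) Z = ex Y (iter_gen conn X ys) Z by [].
by rewrite !e /ext_conn IH !HcDr IH opprD addrACA.
Qed.

Lemma Ell_addf u : Ell conn u -> addf u.
Proof.
elim=> {u} [X ys||u v _ IHu _ IHv|f u _ IH|u v _ IHu _ IHv] a b /=.
- exact: iter_add.
- by rewrite addr0.
- by rewrite IHu IHv addrACA.
- by rewrite IH scalerDr.
- by rewrite IHv IHu.
Qed.

Lemma Ell_sub u v : Ell conn u -> Ell conn v -> Ell conn (fun Z => u Z - v Z).
Proof.
move=> hu hv; have -> : (fun Z => u Z - v Z) = fun Z => u Z + (-1) *: v Z.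
  by apply: functional_extensionality => Z; rewrite scaleN1r.
by apply: Ell_add => //; apply: Ell_scale.
Qed.

Lemma Ell_ext Y u : Ell conn u -> Ell conn (ex Y u).
Proof.
move=> hu; elim: hu => {u} [X ys||u v _ IHu _ IHv|f u hu IH|u v hu IHu hv IHv].
- exact: (Ell_gen conn X (Y :: ys)).
- have -> : ex Y (fun _ => 0) = fun _ => 0.
    by apply: functional_extensionality => Z; rewrite /ext_conn (addf0 (connr_add Y)) subr0.
  exact: Ell_zero.
- have -> : ex Y (fun Z => u Z + v Z) = fun Z => ex Y u Z + ex Y v Z.
    apply: functional_extensionality => Z; rewrite /ext_conn HcDr opprD addrACA //.
  exact: Ell_add.
- have -> : ex Y (fun Z => f *: u Z) = fun Z => rho Y f *: u Z + f *: ex Y u Z.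
    apply: functional_extensionality => Z; rewrite /ext_conn HcZr scalerBr addrA //.
  by apply: Ell_add; apply: Ell_scale.
- have -> : ex Y (u \o v) = fun Z => (ex Y u \o v) Z + (u \o ex Y v) Z.
    by apply: functional_extensionality => Z; rewrite deriv //; apply: Ell_addf.
  by apply: Ell_add; apply: Ell_comp.
Qed.

Lemma ext_delta X Y W : ex Y (dl X) W = dl (conn Y X) W - dl X (dlt Y W).
Proof. exact: (ext_phi (true, X) Y W). Qed.

Lemma Ell_words n : forall X s, (size s < n)%N -> Ell conn (wd X s).
Proof.
elim: n => [//|n IHn] X s.
case: s => [|[[] Y] t] hs.
- exact: (Ell_gen conn X [::]).
- have -> : wd X ((true, Y) :: t) = wd X [::] \o wd Y t by [].
  by apply: Ell_comp; apply: IHn => //=; move: hs => /=; lia.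
- have -> : wd X ((false, Y) :: t) = fun Z =>
    (fun Z => wd (conn Y X) t Z - ex Y (wd X t) Z) Z + wd X [::] (ex Y (Pf t) Z).
    apply: functional_extensionality => Z.
    have e1 : ex Y (wd X t) Z = ex Y (dl X) (Pf t Z) + dl X (ex Y (Pf t) Z) :=
      @deriv (dl X) (Pf t) Y Z (connl_add X).
    rewrite e1 ext_delta.
    change (wd X ((false, Y) :: t) Z) with (dl X (dlt Y (Pf t Z))).
    by symmetry; apply: zf6.
  apply: Ell_add.
    apply: Ell_sub; first by apply: IHn; move: hs => /=; lia.
    by apply: Ell_ext; apply: IHn; move: hs => /=; lia.
  apply: (@ext_words (Ell conn) Y n); first [exact: Ell_zero | exact: Ell_add |
    exact: Ell_sub | exact: Ell_comp | exact: IHn | (move: hs => /=; lia)].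
Qed.

Lemma SW_comp u v : SpanWords br conn u -> SpanWords br conn v -> SpanWords br conn (u \o v).
Proof.
move=> hu hv; elim: hu => {u} [X s||u1 u2 _ IH1 _ IH2|f u _ IH].
- elim: hv => {v} [W t||v1 v2 _ IH1 _ IH2|f v _ IH].
  + have -> : wd X s \o wd W t = wd X (s ++ (true, W) :: t).
      by apply: functional_extensionality => Z; rewrite /= word_comp.
    exact: SW_word.
  + have -> : wd X s \o (fun _ : L => (0 : L)) = fun _ : L => (0 : L).
      by apply: functional_extensionality => Z; rewrite /= (addf0 (word_add X s)).
    exact: SW_zero.
  + have -> : wd X s \o (fun Z => v1 Z + v2 Z) = fun Z => (wd X s \o v1) Z + (wd X s \o v2) Z.
      by apply: functional_extensionality => Z; rewrite /= word_add.
    exact: SW_add.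
  + have -> : wd X s \o (fun Z => f *: v Z) = fun Z => f *: (wd X s \o v) Z.
      by apply: functional_extensionality => Z; rewrite /= word_scale.
    exact: SW_scale.
- exact: SW_zero.
- exact: SW_add.
- exact: SW_scale.
Qed.

Lemma SW_sub u v : SpanWords br conn u -> SpanWords br conn v ->
  SpanWords br conn (fun Z => u Z - v Z).
Proof.
move=> hu hv; have -> : (fun Z => u Z - v Z) = fun Z => u Z + (-1) *: v Z.
  by apply: functional_extensionality => Z; rewrite scaleN1r.
by apply: SW_add => //; apply: SW_scale.
Qed.

Lemma SW_ext Y u : SpanWords br conn u -> SpanWords br conn (ex Y u).
Proof.
move=> hu; elim: hu => {u} [X s||u v hu IHu hv IHv|f u hu IH].
- have -> : ex Y (wd X s) = fun Z =>
    (fun Z => wd (conn Y X) s Z - wd X ((false, Y) :: s) Z) Z + wd X [::] (ex Y (Pf s) Z).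
    apply: functional_extensionality => Z.
    have e1 : ex Y (wd X s) Z = ex Y (dl X) (Pf s Z) + dl X (ex Y (Pf s) Z) :=
      @deriv (dl X) (Pf s) Y Z (connl_add X).
    by rewrite e1 ext_delta.
  apply: SW_add; first by apply: SW_sub; apply: SW_word.
  apply: (@ext_words (SpanWords br conn) Y (size s).+1); first [exact: SW_zero |
    exact: SW_add | exact: SW_sub | exact: SW_comp | (by move=> *; apply: SW_word) |
    (rewrite /=; lia)].
- have -> : ex Y (fun _ => 0) = fun _ => 0.
    by apply: functional_extensionality => Z; rewrite /ext_conn (addf0 (connr_add Y)) subr0.
  exact: SW_zero.
- have -> : ex Y (fun Z => u Z + v Z) = fun Z => ex Y u Z + ex Y v Z.
    apply: functional_extensionality => Z; rewrite /ext_conn HcDr opprD addrACA //.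
  exact: SW_add.
- have -> : ex Y (fun Z => f *: u Z) = fun Z => rho Y f *: u Z + f *: ex Y u Z.
    apply: functional_extensionality => Z; rewrite /ext_conn HcZr scalerBr addrA //.
  by apply: SW_add; apply: SW_scale.
Qed.

Lemma Ell_SW u : Ell conn u -> SpanWords br conn u.
Proof.
elim=> {u} [X ys||u v _ IHu _ IHv|f u _ IH|u v _ IHu _ IHv].
- elim: ys => [|Y ys IH]; first exact: (SW_word br conn X [::]).
  exact: (SW_ext Y IH).
- exact: SW_zero.
- exact: SW_add.
- exact: SW_scale.
- exact: SW_comp.
Qed.

Lemma SW_Ell u : SpanWords br conn u -> Ell conn u.
Proof.
elim=> {u} [X s||u v _ IHu _ IHv|f u _ IH].
- exact: (@Ell_words (size s).+1).
- exact: Ell_zero.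
- exact: Ell_add.
- exact: Ell_scale.
Qed.

End Proof.

Theorem mainTheorem6 (K : fieldType) (R : comAlgType K) (L : lmodType R)
  (rho : L -> R -> R) (br : L -> L -> L) (conn : L -> L -> L) :
  is_postLieRinehart rho br conn ->
  forall u : L -> L, Ell conn u <-> SpanWords br conn u.
Proof.
move=> [[hbr [_ [_ [_ [_ HbZr]]]]] [[HcDl [HcZl [HcDr HcZr]]] [Hflat Htors]]].
move: hbr => [HbDl [HbDr [_ [_ [HbXX _]]]]] u; split.
- by apply: Ell_SW.
- by apply: SW_Ell.
Qed.
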